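(* For any even number $p$, the worst-case egalitarian rank of any balanced categorial sequential allocation mechanism with all agents pessimistic is $n^p-(n-1)p/2$. Moreover, balanced CSAMs have the smallest worst-case egalitarian rank among all CSAMs with all agents pessimistic.
   Context: Basic categorized domain: $n$ agents, $p$ categories $D_i=\{1,\ldots,n\}$ of indivisible items, bundles $\mathfrak D=D_1\times\cdots\times D_p$; each agent $j$ has a linear order $R_j$ over $\mathfrak D$; a profile is $P_n=(R_1,\ldots,R_n)$. $\mathrm{Rank}(R,\vec d)$ is the position of $\vec d$ in $R$ (top $=1$, bottom $=n^p$). CSAM $f_\mathcal O$: given a linear order $\mathcal O$ over $\{1,\ldots,n\}\times\{1,\ldots,p\}$, in rounds $t=1,\ldots,np$, if the $t$-th element of $\mathcal O$ is $(j,i)$ then agent $j$ chooses an item $d_{j,i}$ from $D_{i,t}$, the items of $D_i$ not yet chosen at the start of round $t$. Agent $j$ receives $f^j_\mathcal O(P_n)=(d_{j,1},\ldots,d_{j,p})$. A pessimistic agent $j$ choosing from $D_i$ in round $t$: a bundle is available to her if for each category $l$ from which she has already chosen its $l$-th component equals $d_{j,l}$ and for each other category $l$ its $l$-th component lies in $D_{l,t}$; she chooses the $d\in D_{i,t}$ for which her lowest-ranked available bundle with $i$-th component $d$ is highest in $R_j$. Balanced CSAM (for even $p$): given a linear order $\mathcal K=j_1\rhd\cdots\rhd j_n$ over agents, items are chosen in $p$ phases; in phase $i$ all agents choose from $D_i$, in the order $\mathcal K$ if $i$ is odd and in the reverse of $\mathcal K$ if $i$ is even. Worst-case egalitarian rank: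 $\max_{P_n}\max_{j}\mathrm{Rank}(R_j,f^j_\mathcal O(P_n))$ over all profiles of $n$ agents. *)

(* Defs.v *)
From mathcomp Require Import all_boot.
Set Implicit Arguments. Unset Strict Implicit. Unset Printing Implicit Defensive.

(* Categories D_i = {1..n} are modelled by 'I_n, categories by 'I_p. *)
Definition bundle (n p : nat) := {ffun 'I_p -> 'I_n}.

(* R e d  means  "e is ranked weakly above d" (e R d). *)
Definition lin_order (T : finType) (R : rel T) : Prop :=
  [/\ reflexive R, antisymmetric R, transitive R & total R].

(* position of d in R, top = 1 *)
Definition Rank (T : finType) (R : rel T) (d : T) : nat := #|[set e | R e d]|.

(* partial allocation: st (j,i) = Some d iff agent j already chose d from D_i *)
Definition state (n p : nat) := {ffun 'I_n * 'I_p -> option 'I_n}.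

Definition remaining n p (st : state n p) (i : 'I_p) : {set 'I_n} :=
  [set d : 'I_n | [forall j : 'I_n, st (j, i) != Some d]].

Definition available n p (st : state n p) (j : 'I_n) : {set bundle n p} :=
  [set b : bundle n p | [forall l : 'I_p,
      if st (j, l) is Some d then b l == d else b l \in remaining st l]].

Definition worst_val n p (R : rel (bundle n p)) (st : state n p)
    (j : 'I_n) (i : 'I_p) (d : 'I_n) : nat :=
  \max_(b in available st j | b i == d) Rank R b.

Definition pess_choice n p (R : rel (bundle n p)) (st : state n p)
    (j : 'I_n) (i : 'I_p) : option 'I_n :=
  [pick d in remaining st i |
     [forall d' in remaining st i, worst_val R st j i d <= worst_val R st j i d']].

Definition step n p (P : 'I_n -> rel (bundle n p)) (st : state n p)
    (x : 'I_n * 'I_p) : state n p :=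
  [ffun y => if y == x then pess_choice (P x.1) st x.1 x.2 else st y].

Definition run n p (P : 'I_n -> rel (bundle n p)) (O : seq ('I_n * 'I_p)) : state n p :=
  foldl (step P) [ffun => None] O.

(* f^j_O(P): bundle received by agent j (the default j is never used for a valid O) *)
Definition outcome n p (P : 'I_n -> rel (bundle n p)) (O : seq ('I_n * 'I_p))
    (j : 'I_n) : bundle n p :=
  [ffun l => odflt j (run P O (j, l))].

(* O is a linear order over {1..n} x {1..p}, listed from first to last *)
Definition csam_order n p (O : seq ('I_n * 'I_p)) : Prop :=
  perm_eq O (enum [set: 'I_n * 'I_p]).

Definition agent_order n (K : seq 'I_n) : Prop := perm_eq K (enum [set: 'I_n]).

(* balanced CSAM: phase i (1-indexed) uses K if i odd, rev K if i even;
   with 0-indexed i : 'I_p this is K for even i, rev K for odd i *)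
Definition balanced_order n p (K : seq 'I_n) : seq ('I_n * 'I_p) :=
  flatten [seq [seq (j, i) | j <- if odd i then rev K else K] | i : 'I_p <- enum 'I_p].

Definition profile n p (P : 'I_n -> rel (bundle n p)) : Prop :=
  forall j, lin_order (P j).

Definition worst_case_egal_rank n p (O : seq ('I_n * 'I_p)) (k : nat) : Prop :=
  (forall P, profile P -> forall j, Rank (P j) (outcome P O j) <= k) /\
  (exists P, profile P /\ exists j, Rank (P j) (outcome P O j) = k).

(* Main.v *)
Require Import Defs.
From mathcomp Require Import all_boot.
From mathcomp Require Import zify.
From Stdlib Require Classical_Prop.
Set Implicit Arguments. Unset Strict Implicit. Unset Printing Implicit Defensive.

Section Ranks.
Variable T : finType.
Lemma Rank_lt (R : rel T) e d : lin_order R -> R e d -> e != d -> Rank R e < Rank R d.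
Proof.
case=> Rr Ra Rt Rtot Hed Hne; rewrite /Rank; apply: proper_card; apply/properP; split.
  by apply/subsetP=> x; rewrite !inE => Hxe; exact: Rt Hxe Hed.
exists d; rewrite !inE ?Rr //; apply/negP=> Hde.
by move: Hne; rewrite (Ra e d) ?eqxx // Hed Hde.
Qed.

Lemma Rank_inj (R : rel T) e d : lin_order R -> Rank R e = Rank R d -> e = d.
Proof.
move=> HR; have [Rr Ra Rt Rtot] := HR => Heq.
case: (eqVneq e d) => // Hne.
case/orP: (Rtot e d) => H.
  by have := Rank_lt HR H Hne; rewrite Heq ltnn.
by have := Rank_lt HR H ltac:(by rewrite eq_sym); rewrite Heq ltnn.
Qed.

Lemma Rank_gt0 (R : rel T) d : lin_order R -> 0 < Rank R d.
Proof. by case=> Rr _ _ _; apply/card_gt0P; exists d; rewrite inE Rr. Qed.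

Definition code_rel (c : T -> nat) : rel T := fun e d => c e <= c d.
Lemma code_lin c : injective c -> lin_order (code_rel c).
Proof.
move=> ci; split; rewrite /code_rel.
- by move=> x; exact: leqnn.
- by move=> x y Hxy; apply: ci; apply/anti_leq.
- by move=> y x z; exact: leq_trans.
- by move=> x y; exact: leq_total.
Qed.

Lemma Rank_code_lt c e d : injective c -> c e < c d -> Rank (code_rel c) e < Rank (code_rel c) d.
Proof.
move=> ci H; apply: Rank_lt; first exact: code_lin.
  by rewrite /code_rel ltnW.
by apply/eqP=> E; move: H; rewrite E ltnn.
Qed.

Definition kcode (key : T -> nat) (e : T) : nat := key e * #|T| + enum_rank e.
Lemma kcode_inj key : injective (kcode key).
Proof.
move=> x y; rewrite /kcode => H.
have Hx := ltn_ord (enum_rank x); have Hy := ltn_ord (enum_rank y).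
have H1 : (key x * #|T| + enum_rank x) %% #|T| = (key y * #|T| + enum_rank y) %% #|T| by rewrite H.
rewrite !modnMDl !modn_small // in H1.
by apply: enum_rank_inj; apply: val_inj.
Qed.
Lemma kcode_lt key e d : key e < key d -> kcode key e < kcode key d.
Proof.
rewrite /kcode => H.
have Hx := ltn_ord (enum_rank e).
have : key e * #|T| + #|T| <= key d * #|T| by rewrite -mulSnr leq_mul2r H orbT.
move=> H2; set a := key e * #|T| in H2 *; set b := key d * #|T| in H2 *; set r := nat_of_ord (enum_rank e) in Hx *; set r2 := nat_of_ord (enum_rank d); move: Hx H2; set N := #|T|; move: (N) => NN; lia.
Qed.
Definition key_rel key := code_rel (kcode key).
Lemma key_lin key : lin_order (key_rel key).
Proof. exact: code_lin (@kcode_inj key). Qed.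
Lemma Rank_key_lt key e d : key e < key d -> Rank (key_rel key) e < Rank (key_rel key) d.
Proof. by move=> H; apply: Rank_code_lt; [exact: kcode_inj | exact: kcode_lt]. Qed.

Lemma count_window (S : {set T}) (f : T -> nat) v W x0 :
  {in S &, injective f} -> x0 \in S -> (forall x, x \in S -> v <= f x <= W) -> #|S| + v <= W.+1.
Proof.
move=> fi Hx0 Hb.
have Hv : v <= W by case/andP: (Hb _ Hx0) => H1 H2; exact: leq_trans H2.
have U : uniq [seq f x | x <- enum S].
  by rewrite map_inj_in_uniq ?enum_uniq // => x y; rewrite !mem_enum; exact: fi.
have Sub : {subset [seq f x | x <- enum S] <= iota v (W.+1 - v)}.
  move=> k /mapP [x]; rewrite mem_enum => Hx ->; rewrite mem_iota.
  case/andP: (Hb _ Hx) => H1 H2; apply/andP; split => //; lia.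
have := uniq_leq_size U Sub; rewrite size_map size_iota -cardE; lia.
Qed.
End Ranks.

Section State.
Variables n p : nat.
Notation B := (bundle n p).
Notation St := (state n p).
Notation Pair := ('I_n * 'I_p)%type.
Variable P : 'I_n -> rel B.

Lemma step_other (st : St) x y : y != x -> step P st x y = st y.
Proof. by move=> H; rewrite /step ffunE (negbTE H). Qed.
Lemma step_at (st : St) x : step P st x x = pess_choice (P x.1) st x.1 x.2.
Proof. by rewrite /step ffunE eqxx. Qed.

Lemma rem_step_other (st : St) x l : l != x.2 -> remaining (step P st x) l = remaining st l.
Proof.
move=> Hl; apply/setP=> d; rewrite !inE; apply: eq_forallb => j.
rewrite step_other //; apply/eqP=> E; by move: Hl; rewrite -E eqxx.
Qed.

Lemma rem_step_sub (st : St) x l : st x = None -> remaining (step P st x) l \subset remaining st l.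
Proof.
move=> Hx; apply/subsetP=> d; rewrite !inE => /forallP H; apply/forallP=> j.
have := H j; case: (eqVneq (j, l) x) => [E|Ne].
  by rewrite E Hx.
by rewrite step_other.
Qed.

Lemma rem_step_same (st : St) x d : st x = None -> step P st x x = Some d ->
  remaining (step P st x) x.2 = remaining st x.2 :\ d.
Proof.
move=> Hx Hd; apply/setP=> e; rewrite !inE.
apply/forallP/andP.
  move=> H; split.
    by have := H x.1; rewrite -surjective_pairing Hd; apply: contra => /eqP ->.
  apply/forallP=> j; have := H j; case: (eqVneq (j, x.2) x) => [E|Ne].
    by rewrite E Hx.
  by rewrite step_other.
case=> Hne /forallP H j; case: (eqVneq (j, x.2) x) => [E|Ne].
  by rewrite E Hd; apply: contra Hne => /eqP [->].
by rewrite step_other // H.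
Qed.

Definition Inv (st : St) (s : seq Pair) :=
  (forall x, (st x != None) = (x \in s)) /\
  (forall i j1 j2 d, st (j1, i) = Some d -> st (j2, i) = Some d -> j1 = j2).

Lemma card_pairs (s : seq Pair) i : uniq s ->
  #|[set j | (j, i) \in s]| = count (fun x : Pair => x.2 == i) s.
Proof.
elim: s => [|[a b] s IH] /=.
  by move=> _; apply/eqP; rewrite cards_eq0; apply/eqP/setP=> j; rewrite !inE.
case/andP=> Hx Hu; case: (eqVneq b i) => Ei /=.
  subst b.
  have -> : [set j | (j, i) \in (a, i) :: s] = a |: [set j | (j, i) \in s].
    by apply/setP=> j; rewrite !inE xpair_eqE eqxx andbT.
  by rewrite cardsU1 inE Hx IH.
rewrite add0n -IH //; apply: eq_card => j; rewrite !inE xpair_eqE.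
by rewrite [i == b]eq_sym (negbTE Ei) andbF.
Qed.

Lemma card_rem (st : St) s i : Inv st s -> uniq s ->
  #|remaining st i| = n - count (fun x : Pair => x.2 == i) s.
Proof.
case=> I1 I2 Hu; rewrite -card_pairs //.
pose f (j : 'I_n) := odflt j (st (j, i)).
have E : remaining st i = ~: (f @: [set j | (j, i) \in s]).
  apply/setP=> d; rewrite in_setC inE; apply/forallP/negP.
    move=> H /imsetP [j]; rewrite inE -I1 /f => Hj Ed.
    by move: Hj (H j); case: (st (j, i)) Ed => //= e -> _; rewrite eqxx.
  move=> H j; apply/negP=> /eqP Hj; apply: H; apply/imsetP; exists j.
    by rewrite inE -I1 Hj.
  by rewrite /f Hj.
have Hinj : {in [set j | (j, i) \in s] &, injective f}.
  move=> j1 j2; rewrite !inE -!I1 /f.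
  case E1: (st (j1, i)) => [e1|] //; case E2: (st (j2, i)) => [e2|] // _ _ /= Ee.
  by subst e2; exact: I2 E1 E2.
have HC := cardsC (f @: [set j | (j, i) \in s]); rewrite card_ord (card_in_imset Hinj) in HC.
rewrite E; move: HC; set a := #|~: _|; set b := #|_|; move: (a) (b) => a' b'; lia.
Qed.

Lemma count_lt (st : St) s x : uniq s -> x \notin s ->
  count (fun y : Pair => y.2 == x.2) s < n.
Proof.
move=> Hu Hx; rewrite -card_pairs //.
have HC := cardsC [set j | (j, x.2) \in s]; rewrite card_ord in HC.
have : 0 < #|~: [set j | (j, x.2) \in s]|.
  by apply/card_gt0P; exists x.1; rewrite !inE -surjective_pairing.
lia.
Qed.

Lemma rem_nonempty (st : St) s x : Inv st s -> uniq s -> x \notin s ->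
  exists e, e \in remaining st x.2.
Proof.
move=> HI Hu Hx; apply/card_gt0P; rewrite (card_rem _ HI Hu).
have := count_lt st Hu Hx; lia.
Qed.

Lemma pess_some (R : rel B) (st : St) j i : (exists e, e \in remaining st i) ->
  exists d, [/\ pess_choice R st j i = Some d, d \in remaining st i &
     forall d', d' \in remaining st i -> worst_val R st j i d <= worst_val R st j i d'].
Proof.
case=> e He; rewrite /pess_choice; case: pickP => [d /andP [Hd /forallP Hall]|Hn].
  by exists d; split => // d' Hd'; have := Hall d'; rewrite Hd'.
exfalso.
case: (arg_minnP (worst_val R st j i) He) => d Hd Hmin.
move: (Hn d); have -> : (d \in remaining st i) = true by []; move=> /= /negP; apply; apply/forallP=> dd; apply/implyP; exact: Hmin.
Qed.

Definition choice_ok (st : St) x d := [/\ step P st x x = Some d, d \in remaining st x.2 &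
  forall d', d' \in remaining st x.2 -> worst_val (P x.1) st x.1 x.2 d <= worst_val (P x.1) st x.1 x.2 d'].

Lemma step_choice (st : St) s x : Inv st s -> uniq s -> x \notin s -> exists d, choice_ok st x d.
Proof.
move=> HI Hu Hx; have [d [H1 H2 H3]] := pess_some (P x.1) x.1 (rem_nonempty HI Hu Hx).
by exists d; split => //; rewrite step_at.
Qed.

Lemma Inv_step (st : St) s x : Inv st s -> uniq s -> x \notin s -> Inv (step P st x) (rcons s x).
Proof.
move=> HI Hu Hx; have [d [H1 H2 H3]] := step_choice HI Hu Hx.
case: HI => I1 I2; split.
  move=> y; rewrite mem_rcons in_cons; case: (eqVneq y x) => [->|Ne] /=.
    by rewrite H1.
  by rewrite step_other // I1.
have Hfree : forall j, st (j, x.2) != Some d.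
  by move=> j; move: H2; rewrite inE => /forallP; apply.
move=> i j1 j2 e; case: (eqVneq (j1, i) x) => [E1|N1]; case: (eqVneq (j2, i) x) => [E2|N2].
- by move: E1; rewrite -E2 => [[->]].
- rewrite E1 H1 step_other // => [[<-]] E.
  by move: (Hfree j2); rewrite -E1 /= E eqxx.
- rewrite E2 H1 step_other // => E [Ee]; subst e.
  by move: (Hfree j1); rewrite -E2 /= E eqxx.
- by rewrite !step_other //; exact: I2.
Qed.

Lemma run_rcons s x : run P (rcons s x) = step P (run P s) x.
Proof. by rewrite /run foldl_rcons. Qed.

Lemma Inv_run s : uniq s -> Inv (run P s) s.
Proof.
elim/last_ind: s => [|s x IH].
  move=> _; split; first by move=> x; rewrite /run /= ffunE.
  by move=> i j1 j2 d; rewrite /run /= ffunE.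
rewrite rcons_uniq => /andP [Hx Hu]; rewrite run_rcons; apply: Inv_step => //; exact: IH.
Qed.

Lemma avail_other (st : St) x j : st x = None -> x.1 != j ->
  available (step P st x) j \subset available st j.
Proof.
move=> Hx Hj; apply/subsetP=> b; rewrite !inE => /forallP H; apply/forallP=> l.
have Ne : (j, l) != x by apply: contra Hj => /eqP <-.
have := H l; rewrite step_other //; case: (st (j, l)) => // Hb.
by apply: (subsetP (rem_step_sub l Hx)).
Qed.

Lemma avail_own (st : St) x d : st x = None -> step P st x x = Some d -> d \in remaining st x.2 ->
  available (step P st x) x.1 = [set b in available st x.1 | b x.2 == d].
Proof.
move=> Hx Hd Hr; apply/setP=> b; rewrite !inE.
apply/forallP/andP.
  move=> H; have Hbd : b x.2 == d.
    by have := H x.2; rewrite -surjective_pairing Hd.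
  split => //; apply/forallP=> l; case: (eqVneq l x.2) => [->|Nl].
    by rewrite -surjective_pairing Hx (eqP Hbd).
  have := H l; rewrite step_other ?rem_step_other //.
  by apply: contra Nl => /eqP <-.
case=> /forallP H Hbd l; case: (eqVneq l x.2) => [->|Nl].
  by rewrite -surjective_pairing Hd.
have := H l; rewrite step_other ?rem_step_other //.
by apply: contra Nl => /eqP <-.
Qed.

Lemma class_nonempty (st : St) s j i d : Inv st s -> uniq s -> st (j, i) = None ->
  d \in remaining st i -> exists b : B, b \in available st j /\ b i = d.
Proof.
move=> HI Hu Hji Hd.
pose b : B := [ffun l => if l == i then d else
   if st (j, l) is Some e then e else odflt d [pick e in remaining st l]].
exists b; split; last by rewrite /b ffunE eqxx.
rewrite inE; apply/forallP=> l; rewrite /b ffunE; case: (eqVneq l i) => [->|Nl].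
  by rewrite Hji.
case E: (st (j, l)) => [e|] //.
have Hn : (j, l) \notin s by case: HI => I1 _; rewrite -I1 E.
have [e0 He0] := rem_nonempty HI Hu Hn.
case: pickP => [e' He' | H] /=; [exact: He' | by move: (H e0) => /=; rewrite He0].
Qed.

Definition Wv (st : St) j := \max_(b in available st j) Rank (P j) b.

Lemma wv_attained (st : St) s j i d : Inv st s -> uniq s -> st (j, i) = None ->
  d \in remaining st i -> exists2 b : B, (b \in available st j) && (b i == d) &
  worst_val (P j) st j i d = Rank (P j) b.
Proof.
move=> HI Hu Hji Hd; have [b0 [Hb0 Eb0]] := class_nonempty HI Hu Hji Hd.
have Hc : 0 < #|[pred b : B | (b \in available st j) && (b i == d)]|.
  by apply/card_gt0P; exists b0; rewrite inE Hb0 Eb0 eqxx.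
have [b Hb E] := eq_bigmax_cond (Rank (P j)) Hc.
exists b; first by move: Hb; rewrite inE.
rewrite -E /worst_val; apply: eq_bigl => bb /=; by [].
Qed.

Lemma W_own (st : St) s j i : lin_order (P j) -> Inv st s -> uniq s -> (j, i) \notin s ->
  Wv (step P st (j, i)) j + (#|remaining st i|).-1 <= Wv st j.
Proof.
move=> HR HI Hu Hx; have [d [H1 H2 H3]] := step_choice HI Hu Hx.
have Hji : st (j, i) = None.
  by case: HI => I1 _; apply/eqP; rewrite -[_ == _]negbK I1 Hx.
have EA := avail_own Hji H1 H2; rewrite /= in EA.
have EW : Wv (step P st (j, i)) j = worst_val (P j) st j i d.
  by rewrite /Wv EA /worst_val; apply: eq_bigl => b; rewrite !inE.
have Hle : forall d', d' \in remaining st i -> worst_val (P j) st j i d' <= Wv st j.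
  move=> d' Hd'; apply/bigmax_leqP => b /andP [Hb _].
  by rewrite /Wv; apply: leq_bigmax_cond.
have Hinj : {in remaining st i &, injective (worst_val (P j) st j i)}.
  move=> d1 d2 Hd1 Hd2 E.
  have [b1 /andP [_ /eqP B1] E1] := wv_attained HI Hu Hji Hd1.
  have [b2 /andP [_ /eqP B2] E2] := wv_attained HI Hu Hji Hd2.
  by rewrite -B1 -B2 (Rank_inj HR (etrans (esym E1) (etrans E E2))).
have := count_window Hinj H2 (fun x Hx => introT andP (conj (H3 x Hx) (Hle x Hx))).
have : 0 < #|remaining st i| by apply/card_gt0P; exists d.
rewrite EW /=; lia.
Qed.

Definition cidx (O : seq Pair) j i := count (fun x : Pair => x.2 == i) (take (index (j, i) O) O).
Definition gain (O : seq Pair) j := \sum_(i < p) (n.-1 - cidx O j i).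

Lemma card_bundle : #|B| = n ^ p.
Proof. by rewrite card_ffun !card_ord. Qed.

Lemma cidx_at O s r j i : s ++ (j, i) :: r = O -> (j, i) \notin s ->
  cidx O j i = count (fun x : Pair => x.2 == i) s.
Proof.
move=> <- Hx; rewrite /cidx index_cat (negbTE Hx) /= eqxx addn0.
by rewrite take_size_cat.
Qed.

Lemma upper_prefix O j : lin_order (P j) -> uniq O -> forall s r, s ++ r = O ->
  Wv (run P s) j + \sum_(i < p | (j, i) \in s) (n.-1 - cidx O j i) <= n ^ p.
Proof.
move=> HR HO; elim/last_ind => [|s x IH] r Hsr.
  rewrite big_pred0 // addn0; apply/bigmax_leqP => b _.
  by rewrite -card_bundle; exact: max_card.
have Hsr' : s ++ x :: r = O by rewrite -Hsr cat_rcons.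
have := HO; rewrite -Hsr' cat_uniq => /and3P [Hu _ _].
have Hx : x \notin s.
  by move: HO; rewrite -Hsr' cat_uniq => /and3P [_ /hasPn H _]; apply: H; rewrite inE eqxx.
have HI := Inv_run Hu; have IHs := IH _ Hsr'.
have Hxn : run P s x = None.
  by case: HI => I1 _; apply/eqP; rewrite -[_ == _]negbK I1 Hx.
rewrite run_rcons; clear IH Hsr; case: x Hx Hxn Hsr' => a i Hx Hxn Hsr'.
case: (eqVneq a j) => [Ea|Na].
  subst a; have HW := W_own HR HI Hu Hx.
  rewrite (card_rem _ HI Hu) in HW.
  rewrite (bigD1 i) /=; last by rewrite mem_rcons in_cons eqxx.
  rewrite (@cidx_at _ s r j i erefl Hx).
  rewrite (eq_bigl (fun i' => (j, i') \in s)); last first.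
    move=> i'; rewrite mem_rcons in_cons xpair_eqE eqxx /=.
    case: (eqVneq i' i) => [->|Ni] /=; last by rewrite andbT.
    by rewrite (negbTE Hx).
  rewrite Hsr'; move: IHs HW; set c := count _ s; set S := \sum_(_ < p | _) _; rewrite -!subn1; move: (n ^ p) (Wv (run P s) j) (Wv (step P (run P s) (j,i)) j) => NN w1 w2; lia.
have Hsub := avail_other Hxn (Na : (a, i).1 != j).
have HWle : Wv (step P (run P s) (a, i)) j <= Wv (run P s) j.
  apply/bigmax_leqP => b Hb; rewrite /Wv; apply: leq_bigmax_cond.
  exact: (subsetP Hsub).
rewrite (eq_bigl (fun i' => (j, i') \in s)); last first.
  move=> i'; rewrite mem_rcons in_cons xpair_eqE.
  by rewrite eq_sym (negbTE Na).
rewrite Hsr'; move: IHs HWle; set S := \sum_(_ < p | _) _; move: (n ^ p) (Wv (run P s) j) (Wv (step P (run P s) (a,i)) j) => NN w1 w2; lia.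
Qed.

Lemma upper_bound O j : lin_order (P j) -> uniq O -> (forall x, x \in O) ->
  Rank (P j) (outcome P O j) + gain O j <= n ^ p.
Proof.
move=> HR HO Hall; have := upper_prefix HR HO (cats0 O).
have [I1 _] := Inv_run HO.
rewrite /gain (eq_bigl (fun => true)); last by move=> i; rewrite Hall.
have : Rank (P j) (outcome P O j) <= Wv (run P O) j.
  rewrite /Wv; apply: leq_bigmax_cond; rewrite inE; apply/forallP=> l.
  have := I1 (j, l); rewrite Hall /outcome ffunE.
  by case: (run P O (j, l)).
move: (n ^ p) (Wv (run P O) j) (Rank (P j) (outcome P O j)) => NN w1 w2; set S := \sum_(_ < p) _; lia.
Qed.
End State.

Section Lower.
Variables (n p : nat) (O : seq ('I_n.+1 * 'I_p)) (j : 'I_n.+1).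
Hypothesis HO : uniq O.
Notation B := (bundle n.+1 p).
Notation Pair := ('I_n.+1 * 'I_p)%type.

Definition chain_at (b : B) (i : 'I_p) :=
  [&& b i != ord_max, [forall l, (l != i) ==> (b l == ord_max)] & cidx O j i <= b i].
Definition keyj (b : B) : nat :=
  if [pick i | chain_at b i] is Some i then 2 + n.+1 * (size O - index (j, i) O) + (n.+1 - b i)
  else if [forall l, b l == ord_max] then 1 else 0.
Definition keym (b : B) : nat := \sum_(l < p) (b l : nat).
Definition Pl (a : 'I_n.+1) : rel B := if a == j then key_rel keyj else key_rel keym.

Lemma Pl_lin a : lin_order (Pl a).
Proof. by rewrite /Pl; case: (a == j); exact: key_lin. Qed.

Lemma chain_uniq b i i' : chain_at b i -> chain_at b i' -> i = i'.
Proof.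
case/and3P=> H1 /forallP H2 _ /and3P [H1' _ _]; apply/eqP; apply/negPn/negP => Ne.
by move: (H2 i'); rewrite eq_sym Ne /= (negbTE H1').
Qed.

Lemma keyj_chain b i : chain_at b i -> keyj b = 2 + n.+1 * (size O - index (j, i) O) + (n.+1 - b i).
Proof.
move=> H; rewrite /keyj; case: pickP => [i' Hi'|Hn]; first by rewrite (chain_uniq Hi' H).
by move: (Hn i); rewrite H.
Qed.

Lemma keyj_nochain b : (forall i, ~~ chain_at b i) -> keyj b <= 1.
Proof.
move=> H; rewrite /keyj; case: pickP => [i' Hi'|_]; first by move: (H i'); rewrite Hi'.
by case: ifP.
Qed.

Lemma keym_upd (b : B) i (d : 'I_n.+1) :
  keym [ffun l => if l == i then d else b l] + b i = keym b + d.
Proof.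
rewrite /keym (bigD1 i) //= [in X in _ = X + _](bigD1 i) //= ffunE eqxx.
rewrite (eq_bigr (fun l => (b l : nat))); first by rewrite -addnA [_ + b i]addnC addnA [d + _]addnC -addnA [d + _]addnC addnA; congr (_ + _).
by move=> l Hl; rewrite ffunE (negbTE Hl).
Qed.

Lemma mono_wv (st : state n.+1 p) s a i (d1 d2 : 'I_n.+1) : a != j -> Inv st s -> uniq s ->
  (a, i) \notin s -> d1 \in remaining st i -> d2 \in remaining st i -> d1 < d2 ->
  worst_val (Pl a) st a i d1 < worst_val (Pl a) st a i d2.
Proof.
move=> Na HI Hu Hai Hd1 Hd2 Hlt.
have Hn : st (a, i) = None.
  by case: HI => I1 _; apply/eqP; rewrite -[_ == _]negbK I1 Hai.
have [b1 /andP [Hb1 /eqP E1] W1] := wv_attained Pl HI Hu Hn Hd1.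
pose b2 : B := [ffun l => if l == i then d2 else b1 l].
have Hb2 : b2 \in available st a.
  move: Hb1; rewrite !inE => /forallP H; apply/forallP=> l; rewrite /b2 ffunE.
  case: (eqVneq l i) => [->|Nl]; first by rewrite Hn.
  exact: H.
have Hk := keym_upd b1 i d2; rewrite E1 in Hk.
have : Rank (Pl a) b1 < Rank (Pl a) b2.
  rewrite /Pl (negbTE Na); apply: Rank_key_lt.
  by move: Hk Hlt; rewrite /b2; move: (keym _) (keym b1) => k1 k2; lia.
rewrite -W1 => H; apply: (leq_trans H); apply: leq_bigmax_cond.
by rewrite Hb2 /b2 ffunE eqxx /=.
Qed.

Definition L1 (st : state n.+1 p) (s : seq Pair) :=
  forall l, (j, l) \in s -> st (j, l) = Some ord_max.
Definition L2 (st : state n.+1 p) (s : seq Pair) := forall l, (j, l) \notin s ->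
  remaining st l = [set d : 'I_n.+1 | count (fun x : Pair => x.2 == l) s <= d].

Lemma Pl_j : Pl j = key_rel keyj.
Proof. by rewrite /Pl eqxx. Qed.

Lemma j_pick (st : state n.+1 p) s r i d : s ++ (j, i) :: r = O -> Inv st s -> uniq s ->
  (j, i) \notin s -> L1 st s -> L2 st s -> choice_ok Pl st (j, i) d -> d = ord_max.
Proof.
move=> Hsr HI Hu Hji H1 H2 [Hc1 Hc2 Hc3]; rewrite /= in Hc2 Hc3.
have [I1 _] := HI.
have Hn : st (j, i) = None by apply/eqP; rewrite -[_ == _]negbK I1 Hji.
have Hci := cidx_at Hsr Hji.
have Hrem := H2 i Hji.
have Hcnt : count (fun x : Pair => x.2 == i) s < n.+1 := count_lt st Hu Hji.
apply/eqP; apply/negPn/negP => Nd.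
pose ch : B := [ffun l => if l == i then d else ord_max].
have Hch : ch \in available st j.
  rewrite inE; apply/forallP=> l; rewrite /ch ffunE; case: (eqVneq l i) => [->|Nl].
    by rewrite Hn.
  case Hjl: ((j, l) \in s); first by rewrite (H1 l Hjl).
  have Hjl' : (j, l) \notin s by rewrite Hjl.
  have -> : st (j, l) = None by apply/eqP; rewrite -[_ == _]negbK I1 Hjl'.
  rewrite (H2 l Hjl') inE /=.
  have := count_lt st Hu Hjl'; rewrite /= ltnS; move=> H; exact: H.
have Hchain : chain_at ch i.
  apply/and3P; split; first by rewrite /ch ffunE eqxx.
    by apply/forallP=> l; apply/implyP=> Nl; rewrite /ch ffunE (negbTE Nl).
  by rewrite /ch ffunE eqxx Hci; move: Hc2; rewrite Hrem inE.
have Kch := keyj_chain Hchain.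
have Hmax : (ord_max : 'I_n.+1) \in remaining st i.
  by rewrite Hrem inE /=; move: Hcnt; rewrite ltnS.
have Hpos : index (j, i) O = size s.
  by rewrite -Hsr index_cat (negbTE Hji) /= eqxx addn0.
have Hlt : worst_val (Pl j) st j i ord_max < Rank (Pl j) ch.
  have Hpos0 := Rank_gt0 ch (Pl_lin j).
  suff : worst_val (Pl j) st j i ord_max <= (Rank (Pl j) ch).-1 by lia.
  apply/bigmax_leqP => b /andP [Hb /eqP Hbi].
  suff : Rank (Pl j) b < Rank (Pl j) ch by lia.
  rewrite Pl_j; apply: Rank_key_lt; rewrite Kch.
  case: (pickP (chain_at b)) => [s' Hs'|Hno]; last first.
    have := keyj_nochain (fun i => negbT (Hno i)); move: (keyj b) (n.+1 * (size O - index (j, i) O)) (n.+1 - ch i) => k X Y; lia.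
  rewrite (keyj_chain Hs').
  have Ns : s' != i by apply/eqP=> E; move: Hs'; rewrite E /chain_at Hbi eqxx.
  have Hjs : (j, s') \notin s.
    apply/negP=> Hin; move: Hb; rewrite inE => /forallP /(_ s'); rewrite (H1 s' Hin).
    by move: Hs' => /and3P [/negbTE -> _ _].
  have Hps : size s < index (j, s') O.
    rewrite -Hsr index_cat (negbTE Hjs) /= xpair_eqE eqxx /= (negbTE (ltac:(by rewrite eq_sym) : i != s')).
    lia.
  have Hps2 : index (j, s') O <= size O by exact: index_size.
  have Hd : d < n.+1 := ltn_ord d.
  have Hbs : (b s' : nat) < n.+1 := ltn_ord (b s').
  rewrite Hpos.
  have : n.+1 * (size O - index (j, s') O) + n.+1 <= n.+1 * (size O - size s).
    rewrite -mulnSr leq_mul2l /=; move: Hps Hps2; move: (index (j, s') O) (size O) (size s) => a1 a2 a3; lia.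
  move: (n.+1 * (size O - index (j, s') O)) (n.+1 * (size O - size s)) => X Y.
  have Hchi : ch i = d by rewrite /ch ffunE eqxx.
  rewrite Hchi; move: (nat_of_ord d) (nat_of_ord (b s')) Hd Hbs => x y; lia.
have Hge : Rank (Pl j) ch <= worst_val (Pl j) st j i d.
  rewrite /worst_val; apply: leq_bigmax_cond; apply/andP; split; first exact: Hch. by rewrite /ch ffunE eqxx.
have := Hc3 _ Hmax; lia.
Qed.

Lemma count_rcons' (s : seq Pair) x l :
  count (fun y : Pair => y.2 == l) (rcons s x) = count (fun y : Pair => y.2 == l) s + (x.2 == l).
Proof. by rewrite -cats1 count_cat /= addn0. Qed.

Lemma lower_prefix : forall s r, s ++ r = O -> L1 (run Pl s) s /\ L2 (run Pl s) s.
Proof.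
elim/last_ind => [|s x IH] r Hsr.
  split; first by [].
  move=> l _; apply/setP=> d; rewrite !inE /=; apply/forallP=> j'; by rewrite /run /= ffunE.
have Hsr' : s ++ x :: r = O by rewrite -Hsr cat_rcons.
have := HO; rewrite -Hsr' cat_uniq => /and3P [Hu _ _].
have Hx : x \notin s.
  by move: HO; rewrite -Hsr' cat_uniq => /and3P [_ /hasPn H _]; apply: H; rewrite inE eqxx.
have HI := Inv_run Pl Hu; have [IH1 IH2] := IH _ Hsr'.
have Hxn : run Pl s x = None.
  by case: HI => I1 _; apply/eqP; rewrite -[_ == _]negbK I1 Hx.
have [d Hd] := step_choice Pl HI Hu Hx.
rewrite run_rcons; clear IH Hsr.
move: Hd; case: x Hx Hxn Hsr' => a i Hx Hxn Hsr' Hd.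
have [Hc1 Hc2 Hc3] := Hd.
case: (eqVneq a j) => [Ea|Na].
  subst a; have Hdm := j_pick Hsr' HI Hu Hx IH1 IH2 Hd; subst d.
  split.
    move=> l; rewrite mem_rcons in_cons; case: (eqVneq (j, l) (j, i)) => [E|Ne] /=.
      by rewrite E Hc1.
    by move=> Hl; rewrite step_other // IH1.
  move=> l; rewrite mem_rcons in_cons negb_or => /andP [Ne Hl].
  have Nl : l != i by apply: contra Ne => /eqP ->.
  rewrite rem_step_other // IH2 // count_rcons' /= (eq_sym i) (negbTE Nl) addn0.
  done.
split.
  move=> l; rewrite mem_rcons in_cons; case: (eqVneq (j, l) (a, i)) => [E|Ne] /=.
    by case: E => E; rewrite E eqxx in Na.
  by move=> Hl; rewrite step_other // IH1.
move=> l; rewrite mem_rcons in_cons negb_or => /andP [Ne Hl].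
case: (eqVneq l i) => [El|Nl]; last first.
  rewrite rem_step_other // IH2 // count_rcons' /= (eq_sym i) (negbTE Nl) addn0.
  done.
subst l.
have Hrem := IH2 i Hl.
have Hcnt := count_lt (run Pl s) Hu Hl; rewrite /= in Hcnt.
set c := count _ s in Hrem Hcnt *.
have Hcin : (Ordinal Hcnt) \in remaining (run Pl s) i by rewrite Hrem inE.
have Hdc : (d : nat) <= c.
  rewrite leqNgt; apply/negP=> Hlt.
  have := mono_wv Na HI Hu Hx Hcin Hc2 Hlt; have := Hc3 _ Hcin; rewrite /=; lia.
have Hcd : c <= d by move: Hc2; rewrite Hrem inE.
rewrite (rem_step_same Hxn Hc1) /= Hrem count_rcons' /= eqxx addn1.
apply/setP=> e; rewrite !inE.
have -> : (e == d) = ((e : nat) == c) by rewrite -val_eqE /=; congr (_ == _); apply/eqP; rewrite eqn_leq Hdc Hcd.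
by rewrite ltn_neqAle eq_sym.
Qed.

Definition corner : B := [ffun => ord_max].

Lemma keyj_corner : keyj corner = 1.
Proof.
rewrite /keyj; case: pickP => [i /and3P [H _ _]|_]; first by rewrite ffunE eqxx in H.
by case: ifP => // /negP []; apply/forallP => l; rewrite ffunE.
Qed.

Lemma card_window (c : nat) : #|[set d : 'I_n.+1 | (d != ord_max) && (c <= d)]| <= n - c.
Proof.
have Hsub : [set d : 'I_n.+1 | (d != ord_max) && (c <= d)] \subset
            [set inord (c + val k) | k : 'I_(n - c)].
  apply/subsetP=> d; rewrite inE => /andP [Nd Hcd].
  have Hdn : (d : nat) < n.
    have := ltn_ord d; move: Nd; rewrite -val_eqE /= => Nd H.
    move: (nat_of_ord d) Nd H => x; move/eqP; lia.
  have Hk : d - c < n - c by move: (nat_of_ord d) Hdn Hcd => x; lia.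
  apply/imsetP; exists (Ordinal Hk) => //=.
  by apply: val_inj; rewrite /= inordK subnKC //; lia.
apply: (leq_trans (subset_leq_card Hsub)); apply: (leq_trans (leq_imset_card _ _)).
by rewrite card_ord.
Qed.

Lemma card_chain i : #|[set e | chain_at e i]| <= n - cidx O j i.
Proof.
have Hinj : {in [set e | chain_at e i] &, injective (fun e : B => e i)}.
  move=> e1 e2; rewrite !inE => /and3P [_ /forallP H1 _] /and3P [_ /forallP H2 _] E.
  apply/ffunP=> l; case: (eqVneq l i) => [->//|Nl].
  by move: (H1 l) (H2 l); rewrite Nl /= => /eqP -> /eqP ->.
rewrite -(card_in_imset Hinj); apply: leq_trans (card_window (cidx O j i)).
apply: subset_leq_card; apply/subsetP => d /imsetP [e]; rewrite !inE => /and3P [H1 _ H3] ->.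
by rewrite H1 H3.
Qed.

Lemma card_bigkey : #|[set e : B | 1 < keyj e]| <= gain O j.
Proof.
rewrite /gain /=.
have -> : #|[set e : B | 1 < keyj e]| = \sum_(e in [set e : B | 1 < keyj e]) 1 by rewrite sum1_card.
have H1 : \sum_(e in [set e : B | 1 < keyj e]) 1 <= \sum_(e : B) \sum_(i < p) (chain_at e i : nat).
  rewrite [X in _ <= X](bigID (fun e => e \in [set e : B | 1 < keyj e])) /=.
  apply: leq_trans (leq_addr _ _); apply: leq_sum => e He.
  case: (pickP (chain_at e)) => [i Hi|Hno]; last first.
    by move: He; rewrite inE; have := keyj_nochain (fun i => negbT (Hno i)); move: (keyj e) => k; lia.
  by rewrite (bigD1 i) //= Hi.
apply: (leq_trans H1); rewrite exchange_big /=; apply: leq_sum => i _.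
apply: leq_trans (card_chain i).
by rewrite -sum1_card [X in _ <= X]big_mkcond /=; apply: leq_sum => e _; rewrite inE; case: (chain_at e i).
Qed.

Lemma lower_bound : (forall x, x \in O) -> n.+1 ^ p <= Rank (Pl j) (outcome Pl O j) + gain O j.
Proof.
move=> Hall; have [H1 _] := lower_prefix (cats0 O).
have Eo : outcome Pl O j = corner.
  by apply/ffunP => l; rewrite /outcome !ffunE (H1 l (Hall _)).
rewrite Eo.
have Hsub : [set e : B | keyj e <= 1] \subset [set e | Pl j e corner].
  apply/subsetP => e; rewrite !inE Pl_j /key_rel /code_rel => He.
  have [E|Lt] : e = corner \/ keyj e < keyj corner.
    rewrite keyj_corner; move: He; rewrite /keyj; case: pickP => [i _ | _].
      by rewrite -addnA add2n.
    case: ifP => [/forallP H _|_ _]; last by right.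
    by left; apply/ffunP => l; rewrite ffunE; exact/eqP/H.
    by rewrite E.
  by apply: ltnW; apply: kcode_lt.
have HC := cardsC [set e : B | keyj e <= 1].
have E2 : ~: [set e : B | keyj e <= 1] = [set e : B | 1 < keyj e].
  by apply/setP=> e; rewrite !inE -ltnNge.
rewrite E2 card_bundle in HC.
have := subset_leq_card Hsub; have := card_bigkey; rewrite /Rank.
move: HC; move: (#|_|) => a1; move: (#|_|) => a2; move: (#|_|) => a3.
lia.
Qed.
End Lower.

Section Combi.

Lemma max_exists (Q : nat -> Prop) N : (exists k, Q k) -> (forall k, Q k -> k <= N) ->
  exists k, Q k /\ forall k', Q k' -> k' <= k.
Proof.
elim: N => [|N IH] [k0 Hk0] Hb.
  exists k0; split => // k' Hk'; have := Hb _ Hk'; rewrite leqn0 => /eqP ->; exact: leq0n.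
case: (Classical_Prop.classic (Q N.+1)) => HN.
  by exists N.+1; split.
apply: IH; first by exists k0.
move=> k Hk; have := Hb _ Hk; rewrite leq_eqVlt => /orP [/eqP E|//].
by subst k.
Qed.

Lemma tri_sum m : 2 * \sum_(k < m.+1) (m - k) = m.+1 * m.
Proof.
elim: m => [|m IH]; first by rewrite big_ord_recl big_ord0.
rewrite big_ord_recl /= subn0.
rewrite (eq_bigr (fun k : 'I_m.+1 => m - k)); last by move=> k _; rewrite /bump /= add1n subSS.
move: IH; move: (\sum_(k < m.+1) (m - k)) => T; nia.
Qed.

Lemma sum_parity q (a b : nat) : \sum_(0 <= i < q.*2) (if odd i then a else b) = q * (a + b).
Proof.
elim: q => [|q IH]; first by rewrite big_geq.
rewrite doubleS !big_nat_recr //= IH odd_double /=; lia.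
Qed.

End Combi.

Section Orders.
Variables (n p : nat).
Notation Pair := ('I_n * 'I_p)%type.

Lemma csam_uniq (O : seq Pair) : csam_order O -> uniq O.
Proof. by move=> H; rewrite (perm_uniq H) enum_uniq. Qed.
Lemma csam_all (O : seq Pair) : csam_order O -> forall x, x \in O.
Proof. by move=> H x; rewrite (perm_mem H) mem_enum inE. Qed.

Lemma cidx_filter (O : seq Pair) j i : uniq O -> (j, i) \in O ->
  cidx O j i = index j [seq x.1 | x <- O & x.2 == i].
Proof.
move=> Hu Hin; case/splitPr: Hin Hu => s r Hu.
have Hx : (j, i) \notin s by move: Hu; rewrite cat_uniq => /and3P [_ /hasPn H _]; apply: H; rewrite inE eqxx.
rewrite (cidx_at (erefl _) Hx) filter_cat map_cat /= eqxx /= index_cat.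
have -> : (j \in [seq x.1 | x <- s & x.2 == i]) = false.
  apply/negP => /mapP [[a b]]; rewrite mem_filter /= => /andP [/eqP Eb Hab] Ea.
  by move: Hx; rewrite Ea -Eb Hab.
by rewrite /= eqxx addn0 size_map size_filter.
Qed.

Lemma filter_list_uniq (O : seq Pair) i : uniq O -> uniq [seq x.1 | x <- O & x.2 == i].
Proof.
move=> Hu; rewrite map_inj_in_uniq ?filter_uniq //.
move=> [a b] [c d]; rewrite !mem_filter /= => /andP [/eqP -> _] /andP [/eqP -> _] ->.
done.
Qed.

Lemma filter_list_mem (O : seq Pair) i j : (j, i) \in O -> j \in [seq x.1 | x <- O & x.2 == i].
Proof. by move=> H; apply/mapP; exists (j, i) => //; rewrite mem_filter /= eqxx. Qed.
End Orders.

Lemma sum_index n (L : seq 'I_n.+1) (F : nat -> nat) : uniq L -> (forall j, j \in L) ->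
  \sum_(j : 'I_n.+1) F (index j L) = \sum_(k < n.+1) F k.
Proof.
move=> Hu Hall.
have Hp : perm_eq (index_enum 'I_n.+1) L.
  by apply: uniq_perm; [exact: index_enum_uniq | exact: Hu | move=> x; rewrite mem_index_enum Hall].
have Hs : size L = n.+1.
  move/card_uniqP: (Hu) => <-; rewrite -[RHS](card_ord n.+1); apply: eq_card => x; by rewrite Hall.
rewrite (perm_big _ Hp) /= (big_nth ord0) Hs big_mkord.
by apply: eq_bigr => k _; rewrite index_uniq // Hs.
Qed.

Lemma index_rev (T : eqType) (K : seq T) j : uniq K -> j \in K ->
  index j (rev K) = (size K).-1 - index j K.
Proof.
move=> Hu Hj; have Hi := index_mem j K; rewrite Hj in Hi.
have Hlt : (size K).-1 - index j K < size (rev K) by rewrite size_rev; move: Hi; move: (size K) (index j K) => a b; lia.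
have E : nth j (rev K) ((size K).-1 - index j K) = j.
  rewrite nth_rev; last by rewrite size_rev in Hlt.
  rewrite (_ : size K - ((size K).-1 - index j K).+1 = index j K) ?nth_index //.
  by move: Hi; move: (size K) (index j K) => a b; lia.
by rewrite -{1}E index_uniq // rev_uniq.
Qed.

Lemma sumn_const (T : Type) (s : seq T) c : sumn (map (fun _ => c) s) = c * size s.
Proof. elim: s => [|x s IHs] /=; first by rewrite muln0. by rewrite IHs mulnS. Qed.

Lemma flat_single (T : eqType) (U : Type) (s : seq T) i (A : seq U) : uniq s -> i \in s ->
  flatten [seq (if x == i then A else [::]) | x <- s] = A.
Proof.
elim: s => [|x s IH] //= /andP [Hx Hu]; rewrite in_cons => /orP [/eqP E|Hi].
  subst x; rewrite eqxx; rewrite (_ : flatten _ = [::]) ?cats0 //.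
  elim: s Hx {IH Hu} => [|y s IH2] //=; rewrite in_cons negb_or => /andP [Ny Hs].
  by rewrite eq_sym (negbTE Ny) IH2.
have Nx : x != i by apply: contraNneq Hx => ->.
by rewrite (negbTE Nx) /= IH.
Qed.

Section Balanced.
Variables (n p : nat) (K : seq 'I_n.+1).
Hypothesis HK : agent_order K.
Definition tK (i : 'I_p) := if odd i then rev K else K.

Lemma K_uniq : uniq K.
Proof. by rewrite (perm_uniq HK) enum_uniq. Qed.
Lemma K_mem j : j \in K.
Proof. by rewrite (perm_mem HK) mem_enum inE. Qed.
Lemma K_size : size K = n.+1.
Proof. by rewrite (perm_size HK) -cardE cardsT card_ord. Qed.
Lemma tK_mem i j : j \in tK i.
Proof. by rewrite /tK; case: odd; rewrite ?mem_rev K_mem. Qed.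

Lemma bal_eq : balanced_order p K = [seq (j, i) | i <- enum 'I_p, j <- tK i].
Proof. by []. Qed.

Lemma bal_mem x : x \in balanced_order p K.
Proof.
case: x => j i; rewrite bal_eq; apply/allpairsPdep; exists i, j; split => //.
  by rewrite mem_enum.
exact: tK_mem.
Qed.

Lemma bal_csam : csam_order (balanced_order p K).
Proof.
have Hs : size (balanced_order p K) = n.+1 * p.
  rewrite bal_eq size_allpairs_dep (eq_map (g := fun _ => n.+1)); last first.
    by move=> i; rewrite /tK; case: odd; rewrite ?size_rev K_size.
  by rewrite sumn_const size_enum_ord.
have Hu : uniq (balanced_order p K).
  apply: (@leq_size_uniq _ (enum [set: 'I_n.+1 * 'I_p])); first exact: enum_uniq.
    by move=> x _; exact: bal_mem.
  by rewrite Hs -cardE cardsT card_prod !card_ord.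
apply: uniq_perm => //; first exact: enum_uniq.
by move=> x; rewrite bal_mem mem_enum inE.
Qed.

Lemma bal_filter i : [seq x.1 | x <- balanced_order p K & x.2 == i] = tK i.
Proof.
rewrite /balanced_order filter_flatten map_flatten -map_comp.
rewrite -map_comp (eq_map (g := fun i' : 'I_p => if i' == i then tK i else [::])).
  have Hi : i \in enum 'I_p by rewrite mem_enum.
  exact: (flat_single (tK i) (enum_uniq _) Hi).
move=> i' /=; rewrite -/(tK i') filter_map /=.
case: (eqVneq i' i) => [->|Ni].
  by rewrite (eq_filter (a2 := predT)) ?filter_predT -?map_comp ?map_id // => x; rewrite /= eqxx.
by rewrite (eq_filter (a2 := pred0)) ?filter_pred0 // => x /=; rewrite (negbTE Ni).
Qed.

Lemma bal_gain j : ~~ odd p -> gain (balanced_order p K) j = (n * p) %/ 2.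
Proof.
move=> Hp; have Hcs := bal_csam.
rewrite /gain /=.
rewrite (eq_bigr (fun i : 'I_p => if odd i then index j K else n - index j K)); last first.
  move=> i _; rewrite cidx_filter ?bal_mem ?csam_uniq // bal_filter /tK.
  case: (odd i); last by [].
  rewrite index_rev ?K_uniq ?K_mem // K_size /=.
  have := index_mem j K; rewrite K_mem K_size; move: (index j K) => a; lia.
have Ep : p = (p./2).*2 by rewrite -[LHS](odd_double_half p) (negbTE Hp).
have Hia : index j K <= n by have := index_mem j K; rewrite K_mem K_size.
rewrite -(big_mkord xpredT (fun i : nat => if odd i then index j K else n - index j K)).
move: (p./2) Ep => q ->; rewrite sum_parity -muln2 mulnA mulnK //.
by rewrite subnKC // mulnC.
Qed.
End Balanced.

Lemma exists_small_gain n p (O : seq ('I_n.+1 * 'I_p)) : csam_order O ->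
  exists j, gain O j <= (n * p) %/ 2.
Proof.
move=> Hc; have Hu := csam_uniq Hc; have Hall := csam_all Hc.
have Hsum : \sum_(j : 'I_n.+1) gain O j = p * \sum_(k < n.+1) (n - k).
  rewrite /gain /= exchange_big /=.
  rewrite (eq_bigr (fun _ => \sum_(k < n.+1) (n - k))); last first.
    move=> i _; rewrite (eq_bigr (fun j => n - index j [seq x.1 | x <- O & x.2 == i])); last first.
      by move=> j _; rewrite cidx_filter.
    apply: (sum_index (fun k => n - k)); first exact: filter_list_uniq.
    by move=> j; apply: filter_list_mem.
  by rewrite sum_nat_const card_ord.
have HT := tri_sum n.
pose jm := [arg min_(j < ord0 | true) gain O j].
have Hmin : forall j, gain O jm <= gain O j.
  by rewrite /jm; case: arg_minnP => // j0 _ H j; exact: H.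
exists jm.
have H1 : n.+1 * gain O jm <= \sum_(j : 'I_n.+1) gain O j.
  rewrite -[X in X * _](card_ord n.+1) -sum_nat_const; apply: leq_sum => j _; exact: Hmin.
rewrite leq_divRL //.
move: H1; rewrite Hsum; move: HT; move: (\sum_(k < n.+1) (n - k)) (gain O jm) => T g H2 H1.
have : n.+1 * (g * 2) <= n.+1 * (n * p) by nia.
by rewrite leq_mul2l.
Qed.

Theorem proposition4 (n p : nat) :
  0 < n -> ~~ odd p ->
  (forall K : seq 'I_n, agent_order K ->
     worst_case_egal_rank (balanced_order p K) (n ^ p - ((n - 1) * p) %/ 2)) /\
  (forall O : seq ('I_n * 'I_p), csam_order O ->
     exists k, worst_case_egal_rank O k /\ n ^ p - ((n - 1) * p) %/ 2 <= k).
Proof.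
case: n => [//|n] _ Hp.
rewrite subn1 /=.
split.
  move=> K HK; have Hc := bal_csam p HK; have Hu := csam_uniq Hc; have Hall := csam_all Hc.
  split.
    move=> P HP j; have := upper_bound (HP j) Hu Hall; rewrite (bal_gain HK j Hp).
    move: (Rank _ _) (n.+1 ^ p) ((n * p) %/ 2) => a b c; lia.
  exists (Pl (balanced_order p K) ord0); split; first by move=> a; exact: Pl_lin.
  exists ord0.
  have H1 := upper_bound (Pl_lin (balanced_order p K) ord0 ord0) Hu Hall.
  have H2 := lower_bound ord0 Hu Hall.
  rewrite (bal_gain HK ord0 Hp) in H1 H2.
  move: H1 H2; move: (Rank _ _) (n.+1 ^ p) ((n * p) %/ 2) => a b c; lia.
move=> O Hc; have Hu := csam_uniq Hc; have Hall := csam_all Hc.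
have [j0 Hj0] := exists_small_gain Hc.
pose Q k := exists P, profile P /\ exists j, Rank (P j) (outcome P O j) = k.
have HQ : Q (Rank (Pl O j0 j0) (outcome (Pl O j0) O j0)).
  by exists (Pl O j0); split; [move=> a; exact: Pl_lin | exists j0].
have Hb : forall k, Q k -> k <= n.+1 ^ p.
  move=> k [P [_ [j <-]]]; rewrite -card_bundle; exact: max_card.
have [k [Hk Hmax]] := max_exists (ex_intro _ _ HQ) Hb.
exists k; split.
  split; last exact: Hk.
  by move=> P HP j; apply: Hmax; exists P; split => //; exists j.
have H2 := lower_bound j0 Hu Hall.
have H3 := Hmax _ HQ.
move: H2 H3 Hj0; move: (Rank _ _) (n.+1 ^ p) ((n * p) %/ 2) (gain O j0) => a b c g; lia.
Qed.
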